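(* Let $F$ be a graph and $C$ a cycle of $F$ such that $(F,C)$ forms a conflict path. Then every vertex of $C$ is an attachment of at most two $C$-bridges.
   Context: Let $F$ be a graph and $C$ a cycle of $F$. A $C$-bridge is either a chord of $C$ (an edge not in $C$ with both endpoints on $C$) or a connected component of $F-V(C)$ together with all edges joining it to $C$ and their endpoints on $C$. The attachments $\mathrm{att}(X)$ of a $C$-bridge $X$ are the vertices of $C$ incident to edges of $X$. Two pairs $\{x,y\}$, $\{u,v\}$ of four distinct vertices of $C$ alternate if each of the two arcs of $C$ with endpoints $x,y$ contains exactly one of $u,v$; two vertex sets alternate if some pair from one alternates with some pair from the other. Two $C$-bridges conflict if they share at least three attachments or their attachment sets alternate; the conflict graph $\mathrm{Con}(C)$ has the $C$-bridges as vertices, two adjacent iff they conflict. The pair $(F,C)$ forms a conflict path if every $C$-bridge has exactly two attachments and $\mathrm{Con}(C)$ is a path. *)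

(* Defs.v *)
From mathcomp Require Import all_boot.
Set Implicit Arguments. Unset Strict Implicit. Unset Printing Implicit Defensive.

Section Bridges.
Variables (T : finType) (e : rel T) (c : seq T).

Definition simple_graph := symmetric e /\ irreflexive e.

Definition is_cycle := [&& 3 <= size c, uniq c & cycle e c].

Definition cycle_edge (x y : T) :=
  [&& x \in c, y \in c & (next c x == y) || (next c y == x)].

Definition eoff := [rel x y | [&& e x y, x \notin c & y \notin c]].

Definition comp (x : T) : {set T} := [set y | connect eoff x y].

Definition attK (K : {set T}) : {set T} :=
  [set v | (v \in c) && [exists u in K, e u v]].

(* A C-bridge is encoded by its vertex set:
   - a chord xy: the set {x,y};
   - a component K of F - V(C): the set K together with its attachments. *)
Definition is_chord (B : {set T}) :=
  [exists x, exists y, [&& B == [set x; y], e x y, x \in c, y \in c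
                       & ~~ cycle_edge x y]].
Definition is_comp_bridge (B : {set T}) :=
  [exists x, (x \notin c) && (B == comp x :|: attK (comp x))].
Definition is_bridge (B : {set T}) := is_chord B || is_comp_bridge B.

Definition att (B : {set T}) : {set T} := B :&: [set v | v \in c].

Definition arc1 (x y : T) := rcons (arc c x y) y.
Definition arc2 (x y : T) := rcons (arc c y x) x.

Definition alt_pairs (x y u v : T) :=
  [&& uniq [:: x; y; u; v], all (mem c) [:: x; y; u; v],
      ((u \in arc1 x y) + (v \in arc1 x y) == 1)
    & ((u \in arc2 x y) + (v \in arc2 x y) == 1)].

Definition alt_sets (A B : {set T}) :=
  [exists x in A, exists y in A, exists u in B, exists v in B, alt_pairs x y u v].

Definition conflict (X Y : {set T}) :=
  (2 < #|att X :&: att Y|) || alt_sets (att X) (att Y).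

Definition consecutive (s : seq {set T}) (X Y : {set T}) :=
  ((X, Y) \in zip s (behead s)) || ((Y, X) \in zip s (behead s)).

(* The conflict graph (vertices: C-bridges, edges: conflicting distinct
   pairs) is a path: its vertices can be listed without repetition so that
   two distinct bridges conflict iff they are consecutive. *)
Definition conflict_graph_is_path :=
  exists s : seq {set T},
    [/\ uniq s, forall B, (B \in s) = is_bridge B &
        forall X Y, is_bridge X -> is_bridge Y -> X != Y ->
          conflict X Y = consecutive s X Y].

Definition conflict_path :=
  (forall B, is_bridge B -> #|att B| = 2) /\ conflict_graph_is_path.

End Bridges.

(* Main.v *)
Require Import Defs.
From mathcomp Require Import all_boot.
From mathcomp Require Import zify.
Set Implicit Arguments. Unset Strict Implicit. Unset Printing Implicit Defensive.

Section Core.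
Variables (N : nat) (lo hi : nat -> nat).
Definition cr i j := (lo i < lo j < hi i) && (hi i < hi j) || (lo j < lo i < hi j) && (hi j < hi i).
Definition ins q k := (lo q <= lo k) && (hi k <= hi q).
Definition outs q k := ~~ ins q k && ~~ cr q k.
Hypothesis lohi : forall i, i < N -> lo i < hi i.
Hypothesis crE : forall i j, i < N -> j < N -> i != j -> cr i j = (i == j.+1) || (j == i.+1).

Lemma crC i j : cr i j = cr j i.
Proof. rewrite /cr; apply/idP/idP; lia. Qed.

Lemma L1 q a b : q < N -> a < N -> b < N -> ins q a -> outs q b -> ~~ cr a b.
Proof.
move=> /lohi ? /lohi ? /lohi ?; rewrite /outs /ins /cr.
move=> *; lia.
Qed.
Lemma walk q (D E : nat -> bool) i j :
  q < N -> j < N -> i <= j ->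
  (forall a b, a < N -> b < N -> D a -> E b -> ~~ cr a b) ->
  (forall k, k < N -> ~~ cr q k -> D k || E k) ->
  (forall k, i <= k <= j -> ~~ cr q k) -> D i -> D j.
Proof.
move=> qN jN ij HDE Hsplit Hnc Di.
elim: j jN ij Hnc => [|j IH] jN ij Hnc.
  by move: Di; have -> : i = 0 by lia.
case: (ltngtP i j.+1) => [lt|gt|eq]; last by rewrite -eq.
- have Dj : D j.
    apply: IH; [lia|lia|move=> k Hk; apply: Hnc; lia].

  have : D j.+1 || E j.+1 by apply: Hsplit => //; apply: Hnc; lia.
  case/orP => // Ej.
  have := HDE _ _ (ltnW jN) jN Dj Ej.
  by rewrite crE ?eqxx ?orbT //; lia.
- lia.
Qed.

Lemma core m mid M : m < mid < M -> M < N ->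
  lo m = 0 -> lo mid = 0 -> lo M = 0 -> False.
Proof.
move=> /andP[h1 h2] hM l1 l2 l3.
have Hl k : k < N -> lo k < hi k by apply: lohi.
have c1 : cr mid mid.-1 by rewrite crE; lia.
have c2 : cr mid mid.+1 by rewrite crE; lia.
have c3 : ~~ cr mid.-1 mid.+1 by rewrite crE; lia.
have HA := Hl m; have HB := Hl mid; have HC := Hl M.
have HD := Hl mid.-1; have HE := Hl mid.+1.
move: c1 c2 c3; rewrite /cr => c1 c2 c3.
have [i12|i21] : ins mid.-1 mid.+1 \/ ins mid.+1 mid.-1.
- rewrite /ins; lia.
-
  have nc : ~~ cr mid.-1 M by rewrite crE; lia.
  have oM : outs mid.-1 M by rewrite /outs nc /ins; lia.
  have iM : ins mid.-1 M.
    apply: (@walk mid.-1 (ins mid.-1) (outs mid.-1) mid.+1 M) => //; try lia.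
    + move=> a b aN bN; apply: (@L1 mid.-1) => //; lia.
    + by move=> k kN nk; rewrite /outs nk andbT; case: (ins _ _).
    + move=> k hk; rewrite crE; lia.
  by move: oM; rewrite /outs iM.
- have nc : ~~ cr mid.+1 m by rewrite crE; lia.
  have oM : outs mid.+1 m by rewrite /outs nc /ins; lia.
  have iM : outs mid.+1 mid.-1.
    apply: (@walk mid.+1 (outs mid.+1) (ins mid.+1) m mid.-1) => //; try lia.
    + move=> a b aN bN ha hb; rewrite crC; apply: (@L1 mid.+1) hb ha => //; lia.
    + by move=> k kN nk; rewrite /outs nk andbT orbC; case: (ins _ _).
    + move=> k hk; rewrite crE; lia.
  by move: iM; rewrite /outs i21.
Qed.
End Core.

Section Arc.
Variable T : eqType.

Lemma index_rot (p : seq T) i z : uniq p -> i <= size p -> z \in p ->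
  index z (rot i p) = if i <= index z p then index z p - i else index z p + (size p - i).
Proof.
move=> up ip zp; have jn : index z p < size p by rewrite index_mem.
have urot : uniq (rot i p) by rewrite rot_uniq.
case: leqP => ij.
- have e : nth z (rot i p) (index z p - i) = z.
    rewrite /rot nth_cat size_drop.
    have -> : index z p - i < size p - i by lia.
    by rewrite nth_drop subnKC // nth_index.
  by rewrite -{1}e index_uniq // size_rot; lia.
- have e : nth z (rot i p) (index z p + (size p - i)) = z.
    rewrite /rot nth_cat size_drop.
    have -> : index z p + (size p - i) < size p - i = false by lia.
    by rewrite addnK nth_take // nth_index.
  by rewrite -{1}e index_uniq // size_rot; lia.
Qed.

Definition cyc (a b k : nat) := (a < k < b) || (b < a < k) || (k < b < a).

Lemma index_neq (p : seq T) x y : x \in p -> x != y -> index x p != index y p.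
Proof.
move=> xp; apply: contraNneq => e; apply/eqP.
by rewrite -(nth_index x xp) e nth_index // -index_mem -e index_mem.
Qed.

Lemma arc_mem (p : seq T) x y z : uniq p -> x \in p -> y \in p -> z \in p ->
  z != x -> z != y -> x != y ->
  (z \in arc p x y) = cyc (index x p) (index y p) (index z p).
Proof.
move=> up xp yp zp zx zy xy.
have := index_neq zp zx; have := index_neq zp zy; have := index_neq xp xy.
have := index_mem x p; have := index_mem y p; have := index_mem z p.
rewrite xp yp zp => hz hy hx n1 n2 n3.
rewrite /arc in_take ?mem_rot // !index_rot // ?(ltnW hx) //.
case: (leqP (index x p) (index z p)); case: (leqP (index x p) (index y p)); rewrite /cyc => ? ?; try lia.
Qed.
End Arc.

Definition altI (x y u w : nat) :=
  [&& x != y, x != u, x != w, y != u, y != w, u != w,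
      (cyc x y u + cyc x y w == 1) & (cyc y x u + cyc y x w == 1)].
Definition crsN l h l' h' := (l < l' < h) && (h < h') || (l' < l < h') && (h' < h).
Lemma altI_crs a b u w : altI a b u w -> crsN (minn a b) (maxn a b) (minn u w) (maxn u w).
Proof.
rewrite /altI /cyc /crsN.
case: (ltngtP a b) => ab; case: (ltngtP u w) => uw; rewrite /= ?andbF //.
all: lia.
Qed.
Lemma crs_altI a b u w : a != b -> u != w -> crsN (minn a b) (maxn a b) (minn u w) (maxn u w) -> altI a b u w.
Proof.
rewrite /altI /cyc /crsN.
case: (ltngtP a b) => ab; case: (ltngtP u w) => uw //.
all: lia.
Qed.
Lemma altI_s1 a b u w : altI a b u w = altI b a u w.
Proof. rewrite /altI; apply/idP/idP; lia. Qed.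
Lemma altI_s2 a b u w : altI a b u w = altI a b w u.
Proof. rewrite /altI; apply/idP/idP; lia. Qed.
Lemma altI_xx a u w : altI a a u w = false.
Proof. by rewrite /altI eqxx. Qed.
Lemma altI_uu a b u : altI a b u u = false.
Proof. by rewrite /altI eqxx !andbF. Qed.

Section G.
Variables (T : finType) (c : seq T) (v : T).
Hypotheses (uc : uniq c) (vc : v \in c).

Definition c' := rot (index v c) c.
Definition idx z := index z c'.

Lemma mem_c' z : (z \in c') = (z \in c). Proof. by rewrite mem_rot. Qed.
Lemma uc' : uniq c'. Proof. by rewrite rot_uniq. Qed.
Lemma idxv : idx v = 0. Proof. by rewrite /idx /c' rot_index // index_head. Qed.

Lemma idx_eq p q : p \in c -> (idx p == idx q) = (p == q).
Proof.
move=> pc; apply/idP/idP => [e|/eqP-> //].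
case: (boolP (p == q)) => // /(index_neq (p := c')); rewrite mem_c' => /(_ pc).
by rewrite -/(idx p) -/(idx q) e.
Qed.

Lemma arc_cyc x y z : x \in c -> y \in c -> z \in c -> z != x -> z != y -> x != y ->
  (z \in arc c x y) = cyc (idx x) (idx y) (idx z).
Proof.
move=> xc yc zc zx zy xy.
by rewrite -(arc_rot (index v c) uc xc) arc_mem ?mem_c' //; exact: uc'.
Qed.

Lemma alt_pairsE x y u w : x \in c -> y \in c -> u \in c -> w \in c ->
  alt_pairs c x y u w = altI (idx x) (idx y) (idx u) (idx w).
Proof.
move=> xc yc uc0 wc.
rewrite /alt_pairs /altI /= !inE xc yc uc0 wc /= !negb_or -!andbA.
rewrite !idx_eq //.
case: (x =P y) => //= /eqP xy; case: (x =P u) => //= /eqP xu.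
case: (x =P w) => //= /eqP xw; case: (y =P u) => //= /eqP yu.
case: (y =P w) => //= /eqP yw; case: (u =P w) => //= /eqP uw.
rewrite /arc1 /arc2 !mem_rcons !in_cons.
rewrite ![u == _]eq_sym ![w == _]eq_sym (negbTE yu) (negbTE yw) (negbTE xu) (negbTE xw) /=.
rewrite !arc_cyc // 1?eq_sym //.
Qed.

Definition pa (B : {set T}) := nth v (enum (att c B)) 0.
Definition pb (B : {set T}) := nth v (enum (att c B)) 1.

Lemma pairE B : #|att c B| = 2 -> pa B != pb B /\ att c B = [set pa B; pb B].
Proof.
rewrite /pa /pb; have := mem_enum (att c B); have := enum_uniq (att c B).
rewrite cardE; case: (enum (att c B)) => [|a [|b [|]]] //= + + _.
rewrite !inE andbT => ab me; split => //; apply/setP => z.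
by rewrite -me !inE.
Qed.

Lemma att_c B z : z \in att c B -> z \in c.
Proof. by rewrite /att !inE => /andP[_]. Qed.

Definition lo B := minn (idx (pa B)) (idx (pb B)).
Definition hi B := maxn (idx (pa B)) (idx (pb B)).
Definition crs X Y := crsN (lo X) (hi X) (lo Y) (hi Y).

Lemma pa_c B : #|att c B| = 2 -> pa B \in c /\ pb B \in c.
Proof.
move=> /pairE[_ e]; split; apply: (@att_c B); rewrite e ?set21 ?set22 //.
Qed.

Lemma lohi B : #|att c B| = 2 -> lo B < hi B.
Proof.
move=> h; have [ab _] := pairE h; have [ac bc] := pa_c h.
have : idx (pa B) != idx (pb B) by rewrite idx_eq.
rewrite /lo /hi; lia.
Qed.

Lemma lo0 B : #|att c B| = 2 -> v \in att c B -> lo B = 0.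
Proof.
move=> h; have [_ e] := pairE h; rewrite e /lo => /set2P[] <-; rewrite idxv; lia.
Qed.

Lemma conflict_crs X Y : #|att c X| = 2 -> #|att c Y| = 2 -> conflict c X Y = crs X Y.
Proof.
move=> hX hY; rewrite /conflict.
have -> : (2 < #|att c X :&: att c Y|) = false.
  apply/negbTE; rewrite -leqNgt -hX; apply: subset_leq_card; exact: subsetIl.
have [abX eX] := pairE hX; have [abY eY] := pairE hY.
have [aX bX] := pa_c hX; have [aY bY] := pa_c hY.
rewrite /= /alt_sets eX eY /crs /lo /hi.
have nX : idx (pa X) != idx (pb X) by rewrite idx_eq.
have nY : idx (pa Y) != idx (pb Y) by rewrite idx_eq.
apply/idP/idP.
- case/existsP => x /andP[/set2P hx /existsP[y /andP[/set2P hy]]].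
  case/existsP => u /andP[/set2P hu /existsP[w /andP[/set2P hw]]].
  have xc : x \in c by case: hx => ->.
  have yc : y \in c by case: hy => ->.
  have uc0 : u \in c by case: hu => ->.
  have wc : w \in c by case: hw => ->.
  rewrite alt_pairsE //.
  case: hx => ->; case: hy => ->; case: hu => ->; case: hw => ->;
  rewrite ?altI_xx ?altI_uu // ?(altI_s1 (idx (pb X))) ?(altI_s2 _ _ (idx (pb Y)));
  exact: altI_crs.
- move=> H; apply/existsP; exists (pa X); rewrite set21 /=.
  apply/existsP; exists (pb X); rewrite set22 /=.
  apply/existsP; exists (pa Y); rewrite set21 /=.
  apply/existsP; exists (pb Y); rewrite set22 /=.
  rewrite alt_pairsE //; apply: crs_altI => //.
Qed.
End G.

Lemma consecE (A : eqType) (s : seq A) x0 i j : uniq s -> i < size s -> j < size s ->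
 ((nth x0 s i, nth x0 s j) \in zip s (behead s)) = (j == i.+1).
Proof.
move=> us hi hj; apply/idP/idP.
- case/(nthP (x0,x0)) => k; rewrite size_zip size_behead => hk.
  rewrite nth_zip_cond size_zip size_behead hk nth_behead /= => [[e1 e2]].
  have kl : k < size s by lia.
  move/eqP: e1; rewrite nth_uniq // => /eqP ki.
  have k1 : k.+1 < size s by lia.
  by move/eqP: e2; rewrite nth_uniq // => /eqP <-; rewrite ki.
- move/eqP=> ji; apply/(nthP (x0,x0)); exists i.
    rewrite size_zip size_behead; lia.
  rewrite nth_zip_cond size_zip size_behead.
  have -> : i < minn (size s) (size s).-1 by lia.
  by rewrite nth_behead ji.
Qed.

Lemma sort3 (P : nat -> Prop) i j k : i != j -> j != k -> k != i -> P i -> P j -> P k ->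
  (forall m mid M, m < mid < M -> P m -> P mid -> P M -> False) -> False.
Proof.
move=> ij jk ki Pi Pj Pk H.
case: (ltnP i j) => a; case: (ltnP j k) => b; case: (ltnP i k)=> d;
first [ by apply: (H i j k _ Pi Pj Pk); lia
      | by apply: (H i k j _ Pi Pk Pj); lia
      | by apply: (H j i k _ Pj Pi Pk); lia
      | by apply: (H j k i _ Pj Pk Pi); lia
      | by apply: (H k i j _ Pk Pi Pj); lia
      | by apply: (H k j i _ Pk Pj Pi); lia
      | lia ].
Qed.

Theorem lemma24 (T : finType) (e : rel T) (c : seq T) :
  simple_graph e -> is_cycle e c -> conflict_path e c ->
  forall v, v \in c ->
    #|[set B : {set T} | is_bridge e c B & v \in att c B]| <= 2.
Proof.
move=> _ /and3P[_ uc _] [Hatt [s [us Hs Hc]]] v vc.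
rewrite leqNgt; apply/negP => /card_gt2P [B1 [B2 [B3 [[h1 h2 h3] [n12 n23 n31]]]]].
move: h1 h2 h3; rewrite !inE => /andP[b1 v1] /andP[b2 v2] /andP[b3 v3].
have {v1}v1 : v \in att c B1 by rewrite /att !inE.
have {v2}v2 : v \in att c B2 by rewrite /att !inE.
have {v3}v3 : v \in att c B3 by rewrite /att !inE.
pose N := size s; pose f i := nth set0 s i.
have fin i : i < N -> is_bridge e c (f i) by move=> hi; rewrite -Hs mem_nth.
have lohiH : forall i, i < N -> lo c v (f i) < hi c v (f i).
  by move=> i hi; apply: lohi => //; apply: Hatt; apply: fin.
have crEH : forall i j, i < N -> j < N -> i != j ->
    cr (fun k => lo c v (f k)) (fun k => hi c v (f k)) i j = (i == j.+1) || (j == i.+1).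
  move=> i j hi hj ij.
  have ne : f i != f j by rewrite nth_uniq.
  have := Hc _ _ (fin i hi) (fin j hj) ne.
  rewrite (conflict_crs v uc); try by apply: Hatt; apply: fin.
  move=> e'; change (crs c v (f i) (f j) = (i == j.+1) || (j == i.+1)).
  by rewrite e' /consecutive !consecE // orbC.
have sB B : is_bridge e c B -> v \in att c B ->
    index B s < N /\ lo c v (f (index B s)) = 0.
  move=> bB vB; have Bs : B \in s by rewrite Hs.
  split; first by rewrite index_mem.
  by rewrite /f nth_index //; apply: lo0 => //; apply: Hatt.
have [i1 l1] := sB _ b1 v1; have [i2 l2] := sB _ b2 v2; have [i3 l3] := sB _ b3 v3.
have d B B' : B \in s -> B != B' -> index B s != index B' s by apply: index_neq.
apply: (@sort3 (fun k => k < N /\ lo c v (f k) = 0) (index B1 s) (index B2 s) (index B3 s)).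
- by apply: d; rewrite ?Hs.
- by apply: d; rewrite ?Hs.
- by apply: d; rewrite ?Hs.
- by [].
- by [].
- by [].
move=> m mid M hm [_ lm] [_ lmid] [MN lM].
exact: (core lohiH crEH hm MN lm lmid lM).
Qed.
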